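(* Let $\mathcal{H}=W_{r_1}\otimes\dots\otimes W_{r_N}$ with $\dim W_{r_i}=r_i+1$, and let $\xi_1,\dots,\xi_N\in\mathbb{C}$. Assume the family of $R$-matrices described in the context satisfies the Yang–Baxter equation and the initial condition $R^{W_rW_r}(0)=P^{W_rW_r}$. Fix a site $n\in\{1,\dots,N\}$ and assume that the transfer matrices $t^{(r_i)}(\xi_i)$, $1\le i\le n$, are invertible operators on $\mathcal{H}$. Then for every operator $E^\alpha\in\operatorname{End}(W_{r_n})$, denoting by $E^\alpha_n$ its action on the $n$-th tensor factor of $\mathcal{H}$ and by $E^\alpha_0$ its action on the auxiliary space $W_0\simeq W_{r_n}$, \[ E_n^\alpha=\Big\{\prod_{i=1}^{n-1}t^{(r_i)}(\xi_i)\Big\}\,\operatorname{tr}_0\big(E_0^\alpha\,T^{(r_n)}_{0,1\dots N}(\xi_n)\big)\,\Big\{\prod_{i=1}^{n}t^{(r_i)}(\xi_i)\Big\}^{-1}. \]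
   Context: For finite-dimensional spaces $W_r$ (of dimension $r+1$) one is given, for every pair $(W_r,W_s)$, an operator-valued function $R^{W_rW_s}(\lambda)\in\operatorname{End}(W_r\otimes W_s)$. For spaces labelled $a,b$ in a tensor product, $R_{ab}(\lambda)$ denotes this operator acting on factors $a,b$ (identity elsewhere). Yang–Baxter equation: for any three such spaces labelled $1,2,3$ and any $\lambda_1,\lambda_2,\lambda_3$, $R_{12}(\lambda_1-\lambda_2)R_{13}(\lambda_1-\lambda_3)R_{23}(\lambda_2-\lambda_3)=R_{23}(\lambda_2-\lambda_3)R_{13}(\lambda_1-\lambda_3)R_{12}(\lambda_1-\lambda_2)$. $P^{W_rW_r}$ is the permutation (flip) operator on $W_r\otimes W_r$. For a chosen auxiliary space $W_0$ (labelled 0) isomorphic to $W_{r_n}$, the monodromy matrix is $T^{(r_n)}_{0,1\dots N}(\lambda)=R^{W_0W_{r_N}}_{0N}(\lambda-\xi_N)\cdots R^{W_0W_{r_1}}_{01}(\lambda-\xi_1)\in\operatorname{End}(W_0\otimes\mathcal{H})$, and the transfer matrix is $t^{(r_n)}(\lambda)=\operatorname{tr}_0 T^{(r_n)}_{0,1\dots N}(\lambda)\in\operatorname{End}(\mathcal{H})$, the partial trace being over $W_0$. The transfer matrices $t^{(r_i)}(\xi_i)$ mutually commute. *)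

(* Defs.v *)
From HB Require Import structures.
From mathcomp Require Import all_boot all_order all_algebra.
From mathcomp Require Import reals Rstruct.
From mathcomp.real_closed Require Import complex.
Set Implicit Arguments. Unset Strict Implicit. Unset Printing Implicit Defensive.
Import Order.TTheory GRing.Theory Num.Theory.
Local Open Scope ring_scope.

Definition C : numClosedFieldType := (Rdefinitions.R)[i].

(* Operators on a finite-dimensional space with basis indexed by a finType I
   are matrices 'M[C]_#|I|; mkop builds the matrix with entries f x y
   (x = output basis vector, y = input basis vector). *)
Definition mkop (I : finType) (f : I -> I -> C) : 'M[C]_#|I| :=
  \matrix_(a, b) f (enum_val a) (enum_val b).

(* W_r has basis 'I_r.+1 (dimension r+1).  An R-matrix family:
   Rm r s lam (a,b) (a',b') is the matrix entry <a b| R^{W_r W_s}(lam) |a' b'>. *)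
Definition Rfamily :=
  forall r s : nat, C -> 'I_r.+1 * 'I_s.+1 -> 'I_r.+1 * 'I_s.+1 -> C.

Definition b2C (b : bool) : C := if b then 1 else 0.

Definition YBE (Rm : Rfamily) : Prop :=
  forall (r1 r2 r3 : nat) (l1 l2 l3 : C),
  let T := ('I_r1.+1 * 'I_r2.+1 * 'I_r3.+1)%type in
  let R12 := mkop (fun x y : T =>
      @Rm r1 r2 (l1 - l2) (x.1.1, x.1.2) (y.1.1, y.1.2) * b2C (x.2 == y.2)) in
  let R13 := mkop (fun x y : T =>
      @Rm r1 r3 (l1 - l3) (x.1.1, x.2) (y.1.1, y.2) * b2C (x.1.2 == y.1.2)) in
  let R23 := mkop (fun x y : T =>
      @Rm r2 r3 (l2 - l3) (x.1.2, x.2) (y.1.2, y.2) * b2C (x.1.1 == y.1.1)) in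
  R12 *m R13 *m R23 = R23 *m R13 *m R12.

Definition initial_condition (Rm : Rfamily) : Prop :=
  forall (r : nat) (x y : 'I_r.+1 * 'I_r.+1),
    Rm r r 0 x y = b2C ((x.1 == y.2) && (x.2 == y.1)).

Section Chain.
Variables (N : nat) (r : 'I_N -> nat) (xi : 'I_N -> C) (Rm : Rfamily).

(* Basis of H = W_{r_1} (x) ... (x) W_{r_N} (sites indexed 0..N-1). *)
Definition Hidx : finType := {dffun forall i : 'I_N, 'I_(r i).+1}.

(* Basis of W_0 (x) H, with auxiliary space W_0 = W_s. *)
Definition Aidx (s : nat) : finType := ('I_s.+1 * Hidx)%type.

Definition R0k (s : nat) (k : 'I_N) (mu : C) : 'M[C]_#|Aidx s| :=
  mkop (fun x y : Aidx s =>
    @Rm s (r k) mu (x.1, x.2 k) (y.1, y.2 k) *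
    b2C [forall j : 'I_N, (j != k) ==> (x.2 j == y.2 j)]).

(* Monodromy T_{0,1..N}(lam) = R_{0N}(lam - xi_N) ... R_{01}(lam - xi_1). *)
Definition monodromy (s : nat) (lam : C) : 'M[C]_#|Aidx s| :=
  foldr (fun k acc => acc *m R0k s k (lam - xi k)) 1%:M (enum 'I_N).

Definition tr0 (s : nat) (M : 'M[C]_#|Aidx s|) : 'M[C]_#|Hidx| :=
  mkop (fun x y : Hidx =>
    \sum_(a : 'I_s.+1) M (enum_rank ((a, x) : Aidx s)) (enum_rank ((a, y) : Aidx s))).

Definition transfer (s : nat) (lam : C) : 'M[C]_#|Hidx| := tr0 (monodromy s lam).

Definition tsite (i : 'I_N) : 'M[C]_#|Hidx| := transfer (r i) (xi i).

(* prod_{i < m} t^{(r_i)}(xi_i), in increasing order of i (the factors commute). *)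
Definition tprod (m : nat) : 'M[C]_#|Hidx| :=
  foldr (fun (i : 'I_N) acc => tsite i *m acc) 1%:M [seq i : 'I_N <- enum 'I_N | (i < m)%N].

Definition E_aux (n : 'I_N) (E : 'M[C]_((r n).+1)) : 'M[C]_#|Aidx (r n)| :=
  mkop (fun x y : Aidx (r n) => E x.1 y.1 * b2C (x.2 == y.2)).

Definition E_site (n : 'I_N) (E : 'M[C]_((r n).+1)) : 'M[C]_#|Hidx| :=
  mkop (fun x y : Hidx =>
    E (x n) (y n) * b2C [forall j : 'I_N, (j != n) ==> (x j == y j)]).

End Chain.

(* Main.v *)
Require Import Defs.
From HB Require Import structures.
From mathcomp Require Import all_boot all_order all_algebra.
From mathcomp Require Import ring.
From mathcomp Require Import reals Rstruct.
From mathcomp.real_closed Require Import complex.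
Set Implicit Arguments. Unset Strict Implicit. Unset Printing Implicit Defensive.
Import Order.TTheory GRing.Theory Num.Theory.
Local Open Scope ring_scope.

Lemma b2C_and a b : b2C (a && b) = b2C a * b2C b.
Proof. by case: a; case: b; rewrite /b2C ?mulr1 ?mulr0 ?mul0r. Qed.
Lemma b2C_true : b2C true = 1. Proof. by []. Qed.
Lemma b2C_false : b2C false = 0. Proof. by []. Qed.

Section Gen.
Variable I : finType.

Lemma mkopE (f : I -> I -> C) x y : mkop f (enum_rank x) (enum_rank y) = f x y.
Proof. by rewrite mxE !enum_rankK. Qed.

Lemma sum_ord_enum (F : I -> C) : \sum_(j < #|I|) F (enum_val j) = \sum_z F z.
Proof.
rewrite (reindex (@enum_rank I)) /=; last first.
  by exists (@enum_val I I) => z _; rewrite ?enum_rankK ?enum_valK.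
by apply: eq_bigr => z _; rewrite enum_rankK.
Qed.

Lemma mkop_mul (f g : I -> I -> C) :
  mkop f *m mkop g = mkop (fun x y => \sum_z f x z * g z y).
Proof.
apply/matrixP=> a b; rewrite !mxE.
rewrite -(sum_ord_enum (fun z => f (enum_val a) z * g z (enum_val b))).
by apply: eq_bigr => j _; rewrite !mxE.
Qed.

Lemma mkopP (f g : I -> I -> C) : (forall x y, f x y = g x y) -> mkop f = mkop g.
Proof. by move=> H; apply/matrixP=> a b; rewrite !mxE H. Qed.

Lemma mx_mkop (M : 'M[C]_#|I|) : M = mkop (fun x y => M (enum_rank x) (enum_rank y)).
Proof. by apply/matrixP=> a b; rewrite !mxE !enum_valK. Qed.

Lemma mkop1 : mkop (fun x y : I => b2C (x == y)) = 1%:M.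
Proof.
apply/matrixP=> a b; rewrite !mxE /b2C.
by rewrite (inj_eq enum_val_inj); case: (a == b).
Qed.

Lemma mkop_scale (c : C) (f : I -> I -> C) : c *: mkop f = mkop (fun x y => c * f x y).
Proof. by apply/matrixP=> a b; rewrite !mxE. Qed.

Lemma sum_uniq (F : I -> C) (P : pred I) z0 :
  (forall z, P z -> z = z0) -> \sum_z b2C (P z) * F z = b2C (P z0) * F z0.
Proof.
move=> H.
rewrite (eq_bigr (fun z => if z == z0 then b2C (P z0) * F z0 else 0)).
  by rewrite -big_mkcond big_pred1_eq.
move=> z _; case: eqP => [->//|Hz].
case Pz: (P z); last by rewrite /b2C mul0r.
by case: Hz; apply: H.
Qed.

End Gen.

Section HLevel.
Variables (N : nat) (r : 'I_N -> nat).
Local Notation H := (Hidx r).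

Definition offeq (S : {set 'I_N}) (x y : H) : bool :=
  [forall l, (l \notin S) ==> (x l == y l)].

Definition mixS (S : {set 'I_N}) (x y : H) : H :=
  [ffun l => if l \in S then y l else x l].

Lemma mixSE (S : {set 'I_N}) (x y : H) l : mixS S x y l = if l \in S then y l else x l.
Proof. by rewrite ffunE. Qed.

Lemma offeqP (S : {set 'I_N}) (x y : H) : reflect (forall l, l \notin S -> x l = y l) (offeq S x y).
Proof.
apply: (iffP forallP) => H l.
  by move=> Hl; move: (H l); rewrite Hl /= => /eqP.
by apply/implyP => Hl; rewrite H.
Qed.

Definition local (S : {set 'I_N}) (Y : 'M[C]_#|H|) :=
  exists f : H -> H -> C,
    (forall x x' y y' : H, (forall l, l \in S -> x l = x' l) ->
        (forall l, l \in S -> y l = y' l) -> f x y = f x' y') /\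
    Y = mkop (fun x y => f x y * b2C (offeq S x y)).

Lemma cond_mix (S T : {set 'I_N}) (x y : H) : [disjoint S & T] ->
  offeq S x (mixS S x y) && offeq T (mixS S x y) y = offeq (S :|: T) x y.
Proof.
move=> dST.
have -> : offeq S x (mixS S x y).
  by apply/offeqP => l lS; rewrite mixSE (negbTE lS).
apply/offeqP/offeqP => h l.
- rewrite in_setU negb_or => /andP [lS lT].
  by rewrite -(h l lT) mixSE (negbTE lS).
- move=> lT; rewrite mixSE; case: ifP => lS //.
  by apply: h; rewrite in_setU lS.
Qed.

Lemma local_comm (S T : {set 'I_N}) (Y1 Y2 : 'M[C]_#|H|) : [disjoint S & T] -> local S Y1 -> local T Y2 ->
  Y1 *m Y2 = Y2 *m Y1.
Proof.
move=> dST [f1 [f1P ->]] [f2 [f2P ->]]; rewrite !mkop_mul; apply: mkopP => x y.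
have dis l : l \in S -> l \notin T.
  by move=> lS; rewrite (disjointFr dST lS).
rewrite (eq_bigr (fun z => b2C (offeq S x z && offeq T z y) * (f1 x z * f2 z y)));
  last by move=> z _; rewrite b2C_and; ring.
rewrite [RHS](eq_bigr (fun z => b2C (offeq T x z && offeq S z y) * (f2 x z * f1 z y)));
  last by move=> z _; rewrite b2C_and; ring.
rewrite (@sum_uniq _ _ _ (mixS S x y)); last first.
  move=> z /andP [/offeqP h1 /offeqP h2]; apply/ffunP => l; rewrite mixSE.
  case: ifP => lS; last by rewrite h1 ?lS.
  by rewrite h2 // dis.
rewrite (@sum_uniq _ _ _ (mixS T x y)); last first.
  move=> z /andP [/offeqP h1 /offeqP h2]; apply/ffunP => l; rewrite mixSE.
  case: ifP => lT; last by rewrite h1 ?lT.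
  by rewrite h2 //; apply/negP => lS; move: (dis l lS); rewrite lT.
rewrite !cond_mix // 1?disjoint_sym // setUC.
case: (boolP (offeq _ x y)) => [/offeqP hxy|]; last by rewrite /b2C !mul0r.
congr (_ * _).
rewrite mulrC; congr (_ * _).
- apply: f2P => l lT; rewrite mixSE.
  + by case: ifP => lS //; move: (dis l lS); rewrite lT.
  + by rewrite lT.
- apply: f1P => l lS; rewrite mixSE.
  + by rewrite (negbTE (dis l lS)).
  + by rewrite lS.
Qed.


Definition upd (x : H) (j : 'I_N) (v : 'I_(r j).+1) : H :=
  [ffun l => if l == j then inord (val v) else x l].
Arguments upd : clear implicits.

Lemma updE (x : H) (j : 'I_N) (v : 'I_(r j).+1) (l : 'I_N) : upd x j v l = if l == j then inord (val v) else x l.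
Proof. by rewrite ffunE. Qed.

Lemma upd_same (x : H) (j : 'I_N) (v : 'I_(r j).+1) : upd x j v j = v.
Proof. by rewrite updE eqxx inord_val. Qed.

Lemma upd_other (x : H) (j : 'I_N) (v : 'I_(r j).+1) (l : 'I_N) : l != j -> upd x j v l = x l.
Proof. by move=> h; rewrite updE (negbTE h). Qed.

Definition upd2 (x : H) (j k : 'I_N) (p : 'I_(r j).+1 * 'I_(r k).+1) : H :=
  upd (upd x j p.1) k p.2.
Arguments upd2 : clear implicits.

Lemma upd2_j (x : H) (j k : 'I_N) (p : 'I_(r j).+1 * 'I_(r k).+1) : j != k -> upd2 x j k p j = p.1.
Proof. by move=> h; rewrite /upd2 upd_other // upd_same. Qed.
Lemma upd2_k (x : H) (j k : 'I_N) (p : 'I_(r j).+1 * 'I_(r k).+1) : upd2 x j k p k = p.2.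
Proof. by rewrite /upd2 upd_same. Qed.
Lemma upd2_o (x : H) (j k : 'I_N) (p : 'I_(r j).+1 * 'I_(r k).+1) (l : 'I_N) : l != j -> l != k -> upd2 x j k p l = x l.
Proof. by move=> h1 h2; rewrite /upd2 !upd_other. Qed.

Lemma sum_off2 (j k : 'I_N) (x : H) (G : H -> C) : j != k ->
  \sum_z b2C (offeq [set j; k] x z) * G z =
  \sum_(p : 'I_(r j).+1 * 'I_(r k).+1) G (upd2 x j k p).
Proof.
move=> jk.
have E1 z : b2C (offeq [set j; k] x z) =
    \sum_(p : 'I_(r j).+1 * 'I_(r k).+1) b2C (z == upd2 x j k p) * 1.
  rewrite (@sum_uniq _ _ _ (z j, z k)); last first.
    by move=> p /eqP ->; rewrite upd2_j // upd2_k; case: p.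
  rewrite mulr1; congr b2C; apply/offeqP/eqP => h.
  - apply/ffunP => l; case: (eqVneq l j) => [->|lj]; first by rewrite upd2_j.
    case: (eqVneq l k) => [->|lk]; first by rewrite upd2_k.
    by rewrite upd2_o // h // !inE negb_or lj lk.
  - move=> l; rewrite !inE negb_or => /andP [lj lk].
    by rewrite h upd2_o.
rewrite (eq_bigr (fun z => \sum_(p : 'I_(r j).+1 * 'I_(r k).+1) b2C (z == upd2 x j k p) * G z)); last first.
  by move=> z _; rewrite E1 mulr_suml; apply: eq_bigr => p _; rewrite mulr1.
rewrite exchange_big /=; apply: eq_bigr => p _.
rewrite (@sum_uniq _ _ _ (upd2 x j k p)); last by move=> z /eqP.
by rewrite eqxx /b2C mul1r.
Qed.

End HLevel.
Arguments upd {N r} x j v.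
Arguments upd2 {N r} x j k p.

Section HOps.
Variables (N : nat) (r : 'I_N -> nat) (xi : 'I_N -> C) (Rm : Rfamily).
Local Notation H := (Hidx r).

Definition Rs (j k : 'I_N) : 'M[C]_#|H| :=
  mkop (fun x y : H => @Rm (r j) (r k) (xi j - xi k) (x j, x k) (y j, y k) *
                      b2C (offeq [set j; k] x y)).

Lemma Rs_local j k : local [set j; k] (Rs j k).
Proof.
exists (fun x y : H => @Rm (r j) (r k) (xi j - xi k) (x j, x k) (y j, y k)); split => //.
by move=> x x' y y' hx hy; rewrite !hx ?hy // !inE eqxx ?orbT.
Qed.

Lemma Esite_local (n : 'I_N) (E : 'M[C]_((r n).+1)) : local [set n] (E_site E).
Proof.
exists (fun x y : H => E (x n) (y n)); split.
  by move=> x x' y y' hx hy; rewrite hx ?hy // inE.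
rewrite /E_site; apply: mkopP => x y; congr (_ * b2C _).
by apply: eq_forallb => l; rewrite inE.
Qed.

Definition Xk a b (lam : C) (p q : 'I_a.+1 * 'I_b.+1) : C :=
  \sum_(u : 'I_a.+1 * 'I_b.+1) @Rm a b lam p u * @Rm b a (- lam) (u.2, u.1) (q.2, q.1).
Arguments Xk : clear implicits.

Lemma Rs_unit (j k : 'I_N) : j != k ->
  (forall p q, Xk (r j) (r k) (xi j - xi k) p q =
     b2C (p == q) * Xk (r j) (r k) (xi j - xi k) (ord0, ord0) (ord0, ord0)) ->
  Rs j k *m Rs k j = Xk (r j) (r k) (xi j - xi k) (ord0, ord0) (ord0, ord0) *: 1%:M.
Proof.
move=> jk hU; rewrite /Rs mkop_mul -(mkop1 H) mkop_scale; apply: mkopP => x y.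
rewrite (eq_bigr (fun z => b2C (offeq [set j; k] x z) *
   (@Rm (r j) (r k) (xi j - xi k) (x j, x k) (z j, z k) *
    (@Rm (r k) (r j) (xi k - xi j) (z k, z j) (y k, y j) * b2C (offeq [set k; j] z y))))); last first.
  by move=> z _; ring.
rewrite sum_off2 //.
have hoff p : offeq [set k; j] (upd2 x j k p) y = offeq [set j; k] x y.
  apply/offeqP/offeqP => h l; rewrite !inE negb_or => /andP [l1 l2].
  - by rewrite -h ?upd2_o // !inE negb_or l1 l2.
  - by rewrite upd2_o // h // !inE negb_or l1 l2.
rewrite (eq_bigr (fun p => b2C (offeq [set j; k] x y) *
  (@Rm (r j) (r k) (xi j - xi k) (x j, x k) p *
   @Rm (r k) (r j) (- (xi j - xi k)) (p.2, p.1) (y k, y j)))); last first.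
  move=> p _; rewrite hoff upd2_j // upd2_k opprB; case: p => ? ? /=.
  by rewrite mulrA mulrC.
rewrite -mulr_sumr.
rewrite (_ : \sum_i _ = Xk (r j) (r k) (xi j - xi k) (x j, x k) (y j, y k)) //.
rewrite hU mulrA -b2C_and mulrC; congr (_ * b2C _).
apply/andP/eqP.
- case=> /offeqP h /eqP [e1 e2]; apply/ffunP => l.
  case: (eqVneq l j) => [->//|lj]; case: (eqVneq l k) => [->//|lk].
  by apply: h; rewrite !inE negb_or lj lk.
- by move=> ->; split; [apply/offeqP|].
Qed.

End HOps.

Lemma sum_pair (I J : finType) (G : I * J -> C) :
  \sum_v G v = \sum_i \sum_j G (i, j).
Proof. by rewrite pair_bigA; apply: eq_bigr => -[]. Qed.

Lemma mkop_perm (I : finType) (s : I -> I) (h : I -> I -> C) :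
  mkop (fun v w => b2C (w == s v)) *m mkop h = mkop (fun v y => h (s v) y).
Proof.
rewrite mkop_mul; apply: mkopP => v y.
by rewrite (@sum_uniq _ _ _ (s v)) ?eqxx ?mul1r // => w /eqP.
Qed.

Section YB.
Variable Rm : Rfamily.
Hypothesis hinit : initial_condition Rm.

Lemma R13_perm a b (T := ('I_a.+1 * 'I_b.+1 * 'I_a.+1)%type) (v w : T) :
  @Rm a a 0 (v.1.1, v.2) (w.1.1, w.2) * b2C (v.1.2 == w.1.2) =
  b2C (w == ((v.2, v.1.2), v.1.1)).
Proof.
rewrite hinit -b2C_and; congr b2C.
case: v => [[v1 v2] v3]; case: w => [[w1 w2] w3] /=.
rewrite !xpair_eqE /=.
by rewrite (eq_sym w1) (eq_sym w2) (eq_sym w3); case: (v3 == w1); case: (v1 == w3); case: (v2 == w2).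
Qed.

Lemma ybe_kernel a b lam (x y : ('I_a.+1 * 'I_b.+1 * 'I_a.+1)%type) :
  YBE Rm ->
  b2C (x.2 == y.1.1) * @Xk Rm a b lam (x.1.1, x.1.2) (y.2, y.1.2) =
  b2C (x.1.1 == y.2) * @Xk Rm b a (- lam) (x.1.2, x.2) (y.1.2, y.1.1).
Proof.
move=> /(_ a b a lam 0 lam) /=.
set T := ('I_a.+1 * 'I_b.+1 * 'I_a.+1)%type.
rewrite subr0 subrr sub0r.
rewrite -!mulmxA.
have R13E : mkop (fun v w : T => @Rm a a 0 (v.1.1, v.2) (w.1.1, w.2) * b2C (v.1.2 == w.1.2)) =
   mkop (fun v w : T => b2C (w == ((v.2, v.1.2), v.1.1))).
  by apply: mkopP => v w; apply: R13_perm.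
rewrite R13E.
rewrite !mkop_perm !mkop_mul => /matrixP /(_ (enum_rank x) (enum_rank y)).
rewrite !mkopE /= => E.
have L1 : \sum_(z : T) @Rm a b lam (x.1.1, x.1.2) (z.1.1, z.1.2) * b2C (x.2 == z.2) *
     (@Rm b a (- lam) (z.1.2, z.1.1) (y.1.2, y.2) * b2C (z.2 == y.1.1)) =
   b2C (x.2 == y.1.1) * @Xk Rm a b lam (x.1.1, x.1.2) (y.2, y.1.2).
  rewrite sum_pair /Xk mulr_sumr; apply: eq_bigr => -[u1 u2] _.
  rewrite (eq_bigr (fun z => b2C ((z == x.2) && (z == y.1.1)) *
     (@Rm a b lam (x.1.1, x.1.2) (u1, u2) * @Rm b a (- lam) (u2, u1) (y.1.2, y.2)))); last first.
    move=> z _ /=; rewrite b2C_and (eq_sym x.2); ring.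
  rewrite (@sum_uniq _ _ _ x.2); last by move=> z /andP [/eqP].
  by rewrite eqxx /=.
have L2 : \sum_(z : T) @Rm b a (- lam) (x.1.2, x.2) (z.1.2, z.2) * b2C (x.1.1 == z.1.1) *
     (@Rm a b lam (z.2, z.1.2) (y.1.1, y.1.2) * b2C (z.1.1 == y.2)) =
   b2C (x.1.1 == y.2) * @Xk Rm b a (- lam) (x.1.2, x.2) (y.1.2, y.1.1).
  rewrite sum_pair /Xk opprK mulr_sumr.
  rewrite (eq_bigr (fun i => b2C ((i.1 == x.1.1) && (i.1 == y.2)) *
      \sum_j (@Rm b a (- lam) (x.1.2, x.2) (i.2, j) * @Rm a b lam (j, i.2) (y.1.1, y.1.2)))); last first.
    move=> i _; rewrite mulr_sumr; apply: eq_bigr => j _ /=.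
    rewrite b2C_and (eq_sym x.1.1); ring.
  rewrite sum_pair.
  rewrite (eq_bigr (fun i1 => b2C ((i1 == x.1.1) && (i1 == y.2)) *
      \sum_(u : 'I_b.+1 * 'I_a.+1) (@Rm b a (- lam) (x.1.2, x.2) u * @Rm a b lam (u.2, u.1) (y.1.1, y.1.2)))); last first.
    move=> i1 _ /=; rewrite -mulr_sumr; congr (_ * _).
    by rewrite sum_pair; apply: eq_bigr => i2 _ /=.
  rewrite (@sum_uniq _ _ _ x.1.1); last by move=> z /andP [/eqP].
  by rewrite eqxx /= mulr_sumr.
by move: E; rewrite L1 L2.
Qed.


Lemma Xk_scalar a b lam (p q : 'I_a.+1 * 'I_b.+1) : YBE Rm ->
  @Xk Rm a b lam p q = b2C (p == q) * @Xk Rm a b lam (ord0, ord0) (ord0, ord0).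
Proof.
move=> hY.
have Hi (p' q' : 'I_a.+1 * 'I_b.+1) (al : 'I_a.+1) :
    @Xk Rm a b lam p' q' = b2C (p'.1 == q'.1) * @Xk Rm b a (- lam) (p'.2, al) (q'.2, al).
  have := @ybe_kernel a b lam ((p'.1, p'.2), al) ((al, q'.2), q'.1) hY.
  by rewrite /= eqxx mul1r; case: p' => ? ?; case: q' => ? ?.
have Hii (p' q' : 'I_a.+1 * 'I_b.+1) (be : 'I_b.+1) :
    @Xk Rm a b lam p' q' = b2C (p'.2 == q'.2) * @Xk Rm b a (- lam) (be, p'.1) (be, q'.1).
  have := @ybe_kernel b a (- lam) ((be, p'.1), p'.2) ((q'.2, q'.1), be) hY.
  by rewrite /= eqxx mul1r opprK; case: p' => ? ?; case: q' => ? ? ->.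
case: (eqVneq p q) => [<-|pq].
  rewrite /b2C mul1r; case: p => p1 p2.
  rewrite (Hi _ _ ord0) /= eqxx mul1r.
  rewrite (Hi (ord0, ord0) _ ord0) /= mul1r.
  have := Hii (ord0, p2) (ord0, p2) p2; rewrite /= ?eqxx mul1r => <-.
  have := Hii (ord0, p2) (ord0, p2) ord0; rewrite /= ?eqxx mul1r => ->.
  by have := Hii (ord0, ord0) (ord0, ord0) ord0; rewrite /= ?eqxx mul1r.
rewrite /b2C mul0r.
case: p q pq => p1 p2 [q1 q2] pq.
case: (eqVneq p1 q1) => [e1|n1].
  have n2 : p2 != q2 by apply: contra pq => /eqP e2; rewrite e1 e2.
  by rewrite (Hii _ _ ord0) /= (negbTE n2) /b2C mul0r.
by rewrite (Hi _ _ ord0) /= (negbTE n1) /b2C mul0r.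
Qed.

End YB.

Section ALevel.
Variables (N : nat) (r : 'I_N -> nat) (xi : 'I_N -> C) (Rm : Rfamily).
Hypothesis hinit : initial_condition Rm.
Local Notation H := (Hidx r).

Definition Lop (s : nat) (X : 'M[C]_#|H|) : 'M[C]_#|Aidx r s| :=
  mkop (fun x y : Aidx r s => b2C (x.1 == y.1) * X (enum_rank x.2) (enum_rank y.2)).

Lemma tr0_mkop s (F : Aidx r s -> Aidx r s -> C) :
  tr0 (mkop F) = mkop (fun x y : H => \sum_(a : 'I_s.+1) F (a, x) (a, y)).
Proof. by apply: mkopP => x y; apply: eq_bigr => a _; rewrite mkopE. Qed.

Lemma Lop_mul s (X Y : 'M[C]_#|H|) : Lop s (X *m Y) = Lop s X *m Lop s Y.
Proof.
rewrite /Lop mkop_mul; apply: mkopP => x y.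
rewrite sum_pair.
rewrite (eq_bigr (fun a => b2C ((a == x.1) && (a == y.1)) *
   \sum_(z : H) X (enum_rank x.2) (enum_rank z) * Y (enum_rank z) (enum_rank y.2))); last first.
  move=> a _; rewrite mulr_sumr; apply: eq_bigr => z _ /=.
  rewrite b2C_and (eq_sym x.1); ring.
rewrite (@sum_uniq _ _ _ x.1); last by move=> a /andP [/eqP].
rewrite eqxx /= mxE; congr (_ * _).
rewrite -(sum_ord_enum (fun z : H => X (enum_rank x.2) (enum_rank z) * Y (enum_rank z) (enum_rank y.2))).
by apply: eq_bigr => i _; rewrite enum_valK.
Qed.

Lemma Lop1 s : Lop s 1%:M = 1%:M.
Proof.
rewrite /Lop -(mkop1 (Aidx r s)); apply: mkopP => x y.
rewrite mxE (inj_eq enum_rank_inj).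
have -> : (x.2 == y.2)%:R = b2C (x.2 == y.2) :> C by case: (x.2 == y.2).
rewrite -b2C_and.
by case: x => ? ?; case: y => ? ?; rewrite xpair_eqE.
Qed.

Lemma tr0_Lmul s (X : 'M[C]_#|H|) (M : 'M[C]_#|Aidx r s|) :
  tr0 (Lop s X *m M) = X *m tr0 M.
Proof.
rewrite (mx_mkop M) (mx_mkop X) /Lop !mkop_mul !tr0_mkop.
apply: mkopP => x y.
rewrite (eq_bigr (fun a => \sum_(z : H) X (enum_rank x) (enum_rank z) * M (enum_rank (a, z)) (enum_rank (a, y)))); last first.
  move=> a _; rewrite sum_pair.
  rewrite (eq_bigr (fun b => b2C ((b == a) && true) * \sum_(z : H) X (enum_rank x) (enum_rank z) * M (enum_rank (b, z)) (enum_rank (a, y)))); last first.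
    move=> b _; rewrite mulr_sumr; apply: eq_bigr => z _ /=; rewrite !mkopE andbT (eq_sym a); ring.
  by rewrite (@sum_uniq _ _ _ a) ?eqxx /= ?mul1r // => b /andP [/eqP].
rewrite exchange_big; apply: eq_bigr => z _; rewrite mulr_sumr.
by apply: eq_bigr => a _; rewrite mkopE.
Qed.

Lemma tr0_mulL s (X : 'M[C]_#|H|) (M : 'M[C]_#|Aidx r s|) :
  tr0 (M *m Lop s X) = tr0 M *m X.
Proof.
rewrite (mx_mkop M) (mx_mkop X) /Lop !mkop_mul !tr0_mkop.
apply: mkopP => x y.
rewrite (eq_bigr (fun a => \sum_(z : H) M (enum_rank (a, x)) (enum_rank (a, z)) * X (enum_rank z) (enum_rank y))); last first.
  move=> a _; rewrite sum_pair.
  rewrite (eq_bigr (fun b => b2C ((b == a) && true) * \sum_(z : H) M (enum_rank (a, x)) (enum_rank (b, z)) * X (enum_rank z) (enum_rank y))); last first.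
    move=> b _; rewrite mulr_sumr; apply: eq_bigr => z _ /=; rewrite !mkopE andbT; ring.
  by rewrite (@sum_uniq _ _ _ a) ?eqxx /= ?mul1r // => b /andP [/eqP].
rewrite exchange_big; apply: eq_bigr => z _; rewrite mulr_suml.
by apply: eq_bigr => a _; rewrite mkopE.
Qed.


Lemma offeq_sym (S : {set 'I_N}) (x y : H) : offeq S x y = offeq S y x.
Proof. by apply/offeqP/offeqP => h l hl; rewrite h. Qed.

Lemma offeq_refl (S : {set 'I_N}) (x : H) : offeq S x x.
Proof. by apply/offeqP. Qed.

Lemma eq_off1 (j : 'I_N) (x y : H) : (x == y) = (x j == y j) && offeq [set j] x y.
Proof.
apply/eqP/andP => [->|[/eqP h1 /offeqP h2]]; first by rewrite eqxx offeq_refl.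
apply/ffunP => l; case: (eqVneq l j) => [->//|lj]; by rewrite h2 // inE.
Qed.

Lemma offk_eq (k : 'I_N) (x y : H) :
  [forall j0, (j0 != k) ==> (x j0 == y j0)] = offeq [set k] x y.
Proof. by apply: eq_forallb => l; rewrite inE. Qed.

Lemma R0k_kernel s k mu : R0k r Rm s k mu =
  mkop (fun x y : Aidx r s => @Rm s (r k) mu (x.1, x.2 k) (y.1, y.2 k) * b2C (offeq [set k] x.2 y.2)).
Proof. by apply: mkopP => x y; rewrite offk_eq. Qed.

Definition P0 (j : 'I_N) := R0k r Rm (r j) j (xi j - xi j).

Lemma P0_kernel j : P0 j = mkop (fun x y : Aidx r (r j) =>
  b2C ((x.1 == y.2 j) && (x.2 j == y.1) && offeq [set j] x.2 y.2)).
Proof. by rewrite /P0 R0k_kernel subrr; apply: mkopP => x y; rewrite hinit -b2C_and. Qed.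

Lemma eq_upd (x y : H) (j : 'I_N) (v : 'I_(r j).+1) :
  (x == upd y j v) = (x j == v) && offeq [set j] x y.
Proof.
apply/eqP/andP => [->|[/eqP h1 /offeqP h2]].
  split; first by rewrite upd_same.
  by apply/offeqP => l; rewrite inE => lj; rewrite upd_other.
apply/ffunP => l; case: (eqVneq l j) => [->|lj]; first by rewrite upd_same.
by rewrite upd_other // h2 // inE.
Qed.

Lemma off1_upd (x y : H) (j : 'I_N) (v : 'I_(r j).+1) :
  offeq [set j] (upd x j v) y = offeq [set j] x y.
Proof.
apply/offeqP/offeqP => h l hl; rewrite -h //; rewrite upd_other //; by move: hl; rewrite inE.
Qed.

Lemma uniq_P0 j (y : H) (a : 'I_(r j).+1) (z : Aidx r (r j)) :
  (z.1 == y j) && (z.2 j == a) && offeq [set j] z.2 y -> z = (y j, upd y j a).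
Proof.
case: z => z1 z2 /= /andP [/andP [/eqP -> h2] h3]; congr pair.
by apply/eqP; rewrite eq_upd h2.
Qed.

Lemma tr0_P0 j : tr0 (P0 j) = 1%:M.
Proof.
rewrite P0_kernel tr0_mkop -mkop1; apply: mkopP => x y.
rewrite (eq_bigr (fun a => b2C ((a == y j) && ((x j == a) && offeq [set j] x y)) * 1)); last first.
  by move=> a _; rewrite mulr1 andbA.
rewrite (@sum_uniq _ _ _ (y j)); last by move=> a /andP [/eqP].
rewrite mulr1 eqxx /=; congr b2C.
apply/andP/eqP => [[/eqP h1 /offeqP h2]|->]; last by split => //; apply/offeqP.
apply/ffunP => l; case: (eqVneq l j) => [->//|lj]; by rewrite h2 // inE.
Qed.

Lemma P0_invol j : P0 j *m P0 j = 1%:M.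
Proof.
rewrite P0_kernel mkop_mul -mkop1; apply: mkopP => x y.
rewrite (eq_bigr (fun z : Aidx r (r j) => b2C (((z.1 == x.2 j) && (z.2 j == x.1) && offeq [set j] z.2 x.2) &&
     ((z.1 == y.2 j) && (z.2 j == y.1) && offeq [set j] z.2 y.2)) * 1)); last first.
  move=> z _; rewrite mulr1 -b2C_and; congr b2C; congr andb.
  by rewrite (eq_sym x.1) (eq_sym (x.2 j)) (andbC (z.2 j == x.1)) offeq_sym.
rewrite (@sum_uniq _ _ _ (x.2 j, upd x.2 j x.1)); last by move=> z /andP [/uniq_P0].
rewrite mulr1 /= upd_same !eqxx off1_upd /=; congr b2C.
case: x => x1 x2; case: y => y1 y2 /=.
rewrite xpair_eqE off1_upd offeq_refl /= (eq_off1 j x2 y2).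
by case: (x1 == y1); case: (x2 j == y2 j); case: (offeq _ x2 y2).
Qed.


Lemma off_updk (x y : H) (j k : 'I_N) (a : 'I_(r j).+1) : k != j ->
  offeq [set k] x (upd y j a) = (x j == a) && offeq [set j; k] x y.
Proof.
move=> kj; apply/offeqP/andP => [h|[/eqP h1 /offeqP h2] l].
  split; first by rewrite h ?upd_same // inE eq_sym.
  apply/offeqP => l; rewrite !inE negb_or => /andP [lj lk].
  by rewrite h ?upd_other // inE.
rewrite inE => lk; case: (eqVneq l j) => [->|lj]; first by rewrite upd_same.
by rewrite upd_other // h2 // !inE negb_or lj lk.
Qed.

Lemma off2_upd (x y : H) (j k : 'I_N) (a : 'I_(r j).+1) :
  offeq [set j; k] (upd x j a) y = offeq [set j; k] x y.
Proof.
apply/offeqP/offeqP => h l hl; rewrite -h //; rewrite upd_other //;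
  by move: hl; rewrite !inE negb_or => /andP [].
Qed.

Lemma R0k_P0 (j k : 'I_N) : k != j ->
  R0k r Rm (r j) k (xi j - xi k) *m P0 j = P0 j *m Lop (r j) (Rs r xi Rm j k).
Proof.
move=> kj; rewrite R0k_kernel P0_kernel /Lop !mkop_mul; apply: mkopP => x y.
rewrite (eq_bigr (fun z : Aidx r (r j) => b2C (((z.1 == y.2 j) && (z.2 j == y.1) && offeq [set j] z.2 y.2)
     && offeq [set k] x.2 z.2) * @Rm (r j) (r k) (xi j - xi k) (x.1, x.2 k) (z.1, z.2 k))); last first.
  by move=> z _; rewrite !b2C_and; ring.
rewrite (@sum_uniq _ _ _ (y.2 j, upd y.2 j y.1)); last by move=> z /andP [/uniq_P0].
rewrite [RHS](eq_bigr (fun z : Aidx r (r j) => b2C (((z.1 == x.2 j) && (z.2 j == x.1) && offeq [set j] z.2 x.2)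
     && ((z.1 == y.1) && offeq [set j; k] z.2 y.2)) *
     @Rm (r j) (r k) (xi j - xi k) (z.2 j, z.2 k) (y.2 j, y.2 k))); last first.
  move=> z _; rewrite /Rs mkopE (eq_sym x.1) (eq_sym (x.2 j)) (offeq_sym _ x.2) !b2C_and; ring.
rewrite (@sum_uniq _ _ _ (x.2 j, upd x.2 j x.1)); last by move=> z /andP [/uniq_P0].
rewrite /= !upd_same !eqxx off1_upd offeq_refl off2_upd !upd_other // 1?eq_sym //.
by rewrite off_updk // off1_upd offeq_refl (eq_sym y.1).
Qed.


Lemma Eaux_P0 (n : 'I_N) (E : 'M[C]_((r n).+1)) :
  E_aux E *m P0 n = P0 n *m Lop (r n) (E_site E).
Proof.
rewrite P0_kernel /E_aux /Lop !mkop_mul; apply: mkopP => x y.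
rewrite (eq_bigr (fun z : Aidx r (r n) => b2C (((z.1 == y.2 n) && (z.2 n == y.1) && offeq [set n] z.2 y.2)
     && (x.2 == z.2)) * E x.1 z.1)); last first.
  by move=> z _; rewrite !b2C_and; ring.
rewrite (@sum_uniq _ _ _ (y.2 n, upd y.2 n y.1)); last by move=> z /andP [/uniq_P0].
rewrite [RHS](eq_bigr (fun z : Aidx r (r n) => b2C (((z.1 == x.2 n) && (z.2 n == x.1) && offeq [set n] z.2 x.2)
     && ((z.1 == y.1) && offeq [set n] z.2 y.2)) * E (z.2 n) (y.2 n))); last first.
  move=> z _; rewrite /E_site mkopE offk_eq (eq_sym x.1) (eq_sym (x.2 n)) (offeq_sym _ x.2) !b2C_and; ring.
rewrite (@sum_uniq _ _ _ (x.2 n, upd x.2 n x.1)); last by move=> z /andP [/uniq_P0].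
rewrite /= !upd_same !eqxx off1_upd offeq_refl eq_upd /=.
by rewrite !off1_upd offeq_refl.
Qed.


Lemma Lop_mkop s (g : H -> H -> C) :
  Lop s (mkop g) = mkop (fun x y : Aidx r s => b2C (x.1 == y.1) * g x.2 y.2).
Proof. by apply: mkopP => x y; rewrite mkopE. Qed.

Lemma Lop_R0k (S : {set 'I_N}) (Y : 'M[C]_#|H|) s k mu :
  local S Y -> k \notin S -> Lop s Y *m R0k r Rm s k mu = R0k r Rm s k mu *m Lop s Y.
Proof.
move=> [f [fP ->]] kS; rewrite Lop_mkop R0k_kernel !mkop_mul; apply: mkopP => x y.
have d1 : [disjoint S & [set k]] by rewrite disjoint_sym disjoints1.
have d2 : [disjoint [set k] & S] by rewrite disjoints1.
rewrite (eq_bigr (fun z : Aidx r s => b2C ((z.1 == x.1) && (offeq S x.2 z.2 && offeq [set k] z.2 y.2)) *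
     (f x.2 z.2 * @Rm s (r k) mu (z.1, z.2 k) (y.1, y.2 k)))); last first.
  by move=> z _; rewrite !b2C_and (eq_sym z.1); ring.
rewrite (@sum_uniq _ _ _ (x.1, mixS S x.2 y.2)); last first.
  case=> z1 z2 /andP [/eqP /= -> /andP [/offeqP h1 /offeqP h2]]; congr pair.
  apply/ffunP => l; rewrite mixSE; case: ifP => lS; last by rewrite h1 ?lS.
  by rewrite h2 // inE; apply: contraNneq kS => <-.
rewrite [RHS](eq_bigr (fun z : Aidx r s => b2C ((z.1 == y.1) && (offeq [set k] x.2 z.2 && offeq S z.2 y.2)) *
     (@Rm s (r k) mu (x.1, x.2 k) (z.1, z.2 k) * f z.2 y.2))); last first.
  by move=> z _; rewrite !b2C_and (eq_sym z.1); ring.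
rewrite (@sum_uniq _ _ _ (y.1, mixS [set k] x.2 y.2)); last first.
  case=> z1 z2 /andP [/eqP /= -> /andP [/offeqP h1 /offeqP h2]]; congr pair.
  apply/ffunP => l; rewrite mixSE; case: ifP => lk; last by rewrite h1 ?lk.
  by rewrite h2 //; move: lk; rewrite inE => /eqP ->.
rewrite /= !eqxx /= cond_mix // cond_mix // setUC.
rewrite !mixSE (negbTE kS) inE eqxx [X in _ * X = _]mulrC; congr (_ * (_ * _)).
apply: fP => l lS; rewrite mixSE ?lS //.
by rewrite inE; case: eqP => // e; move: kS; rewrite -e lS.
Qed.

End ALevel.

Section Lists.
Variable N : nat.

Definition lo (m : nat) := [seq i : 'I_N <- enum 'I_N | (i < m)%N].
Definition hiN (m : nat) := [seq i : 'I_N <- enum 'I_N | (m <= i)%N].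

Lemma map_val_filter (P : pred nat) :
  map val [seq i <- enum 'I_N | P (val i)] = [seq k <- iota 0 N | P k].
Proof. by rewrite -val_enum_ord filter_map. Qed.

Lemma enum_split (m : 'I_N) : enum 'I_N = lo m ++ m :: hiN m.+1.
Proof.
apply: (inj_map val_inj); rewrite map_cat /= /lo /hiN.
rewrite (map_val_filter (fun k => k < m)%N) (map_val_filter (fun k => m < k)%N) val_enum_ord.
have mN : (m < N)%N := ltn_ord m.
have -> : iota 0 N = iota 0 m.+1 ++ iota m.+1 (N - m.+1) by rewrite -iotaD subnKC.
rewrite !filter_cat.
have -> : [seq k <- iota 0 m.+1 | (k < m)%N] = iota 0 m.
  by have := @filter_iota_ltn 0 m.+1 m (leqnSn m); rewrite add0n.
rewrite (@eq_in_filter _ _ pred0 (iota m.+1 _)); last first.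
  by move=> i; rewrite mem_iota => /andP [h _]; apply/negbTE; rewrite -leqNgt ltnW.
rewrite filter_pred0 cats0.
rewrite (@eq_in_filter _ _ pred0 (iota 0 m.+1)); last first.
  by move=> i; rewrite mem_iota add0n => /andP [_ h]; apply/negbTE; rewrite -leqNgt -ltnS.
rewrite filter_pred0 /=.
rewrite (@eq_in_filter _ _ predT); last by move=> i; rewrite mem_iota => /andP [].
rewrite filter_predT.
have e : iota 0 m.+1 = iota 0 m ++ [:: (m : nat)] by rewrite -addn1 iotaD.
by rewrite -[(m : nat) :: _]cat1s catA -e.
Qed.

Lemma filter_enum_split (m : 'I_N) (P : pred 'I_N) :
  [seq i <- enum 'I_N | P i] =
  [seq i <- lo m | P i] ++ (if P m then [:: m] else [::]) ++ [seq i <- hiN m.+1 | P i].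
Proof. by rewrite {1}(enum_split m) filter_cat /=; case: (P m). Qed.

Lemma mem_lo m i : (i \in lo m) = (i < m)%N.
Proof. by rewrite mem_filter mem_enum andbT. Qed.
Lemma mem_hiN m i : (i \in hiN m) = (m <= i)%N.
Proof. by rewrite mem_filter mem_enum andbT. Qed.

Lemma lo_S (m : 'I_N) : lo m.+1 = lo m ++ [:: m].
Proof.
rewrite {1}/lo (filter_enum_split m) ltnSn.
rewrite (@eq_in_filter _ _ predT); last by move=> i; rewrite mem_lo => /ltnW.
rewrite filter_predT (@eq_in_filter _ _ pred0); last first.
  by move=> i; rewrite mem_hiN => h; apply/negbTE; rewrite -leqNgt.
by rewrite filter_pred0 cats0.
Qed.

Lemma hiN_S (m : 'I_N) : hiN m = m :: hiN m.+1.
Proof.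
rewrite {1}/hiN (filter_enum_split m) leqnn.
rewrite (@eq_in_filter _ _ pred0); last first.
  by move=> i; rewrite mem_lo => h; apply/negbTE; rewrite -ltnNge.
rewrite filter_pred0 (@eq_in_filter _ _ predT); last by move=> i; rewrite mem_hiN => /ltnW.
by rewrite filter_predT.
Qed.

End Lists.

Section Prods.
Variable n : nat.
Definition prodl (T : Type) (F : T -> 'M[C]_n) (s : seq T) : 'M[C]_n :=
  foldr (fun k acc => F k *m acc) 1%:M s.

Lemma prodl_cat T (F : T -> 'M[C]_n) s1 s2 : prodl F (s1 ++ s2) = prodl F s1 *m prodl F s2.
Proof. by elim: s1 => [|a s IH] /=; rewrite ?mul1mx // IH mulmxA. Qed.

Lemma prodl1 T (F : T -> 'M[C]_n) a : prodl F [:: a] = F a.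
Proof. by rewrite /= mulmx1. Qed.

Lemma foldr_acc T (F : T -> 'M[C]_n) s :
  foldr (fun k acc => acc *m F k) 1%:M s = prodl F (rev s).
Proof.
elim: s => [|a s IH] //=; by rewrite IH rev_cons -cats1 prodl_cat prodl1.
Qed.

Lemma comm_prodl (T : eqType) (F : T -> 'M[C]_n) (s : seq T) (A : 'M[C]_n) :
  (forall k, k \in s -> A *m F k = F k *m A) -> A *m prodl F s = prodl F s *m A.
Proof.
elim: s => [|a s IH] h /=; first by rewrite mulmx1 mul1mx.
have IH' : A *m prodl F s = prodl F s *m A.
  by apply: IH => k ks; apply: h; rewrite inE ks orbT.
by rewrite mulmxA h ?mem_head // -!mulmxA IH'.
Qed.

Lemma move_prodl (T : eqType) (F G : T -> 'M[C]_n) (s : seq T) (P : 'M[C]_n) :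
  (forall k, k \in s -> F k *m P = P *m G k) -> prodl F s *m P = P *m prodl G s.
Proof.
elim: s => [|a s IH] h /=; first by rewrite mulmx1 mul1mx.
rewrite -mulmxA IH; last by move=> k ks; apply: h; rewrite inE ks orbT.
by rewrite !mulmxA h ?mem_head.
Qed.

Lemma unit_prodl (T : eqType) (F : T -> 'M[C]_n) (s : seq T) :
  (forall k, k \in s -> F k \in unitmx) -> prodl F s \in unitmx.
Proof.
elim: s => [|a s IH] h /=; first exact: unitmx1.
by rewrite unitmx_mul h ?mem_head // IH // => k ks; apply: h; rewrite inE ks orbT.
Qed.

End Prods.

Section Main.
Variables (N : nat) (r : 'I_N -> nat) (xi : 'I_N -> C) (Rm : Rfamily).
Hypothesis hinit : initial_condition Rm.
Local Notation H := (Hidx r).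
Local Notation Rs := (Rs r xi Rm).

Definition R0' (j k : 'I_N) := R0k r Rm (r j) k (xi j - xi k).
Definition A_ (j : 'I_N) := prodl (Rs j) (rev (hiN N j.+1)).
Definition B_ (j : 'I_N) := prodl (Rs j) (rev (lo N j)).

Lemma Lop_prodl s (T : eqType) (F : T -> 'M[C]_#|H|) (l : seq T) :
  Lop s (prodl F l) = prodl (fun k => Lop s (F k)) l.
Proof. by elim: l => [|a l IH] /=; rewrite ?Lop1 // Lop_mul IH. Qed.


Lemma mono_split (j : 'I_N) : monodromy r xi Rm (r j) (xi j) =
  prodl (R0' j) (rev (hiN N j.+1)) *m P0 r xi Rm j *m prodl (R0' j) (rev (lo N j)).
Proof.
rewrite /monodromy (foldr_acc (R0' j)) (enum_split j) rev_cat rev_cons -cats1.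
by rewrite !prodl_cat prodl1.
Qed.

Lemma move_prodl' (T : eqType) n (F G : T -> 'M[C]_n) (s : seq T) (P : 'M[C]_n) :
  (forall k, k \in s -> P *m F k = G k *m P) -> P *m prodl F s = prodl G s *m P.
Proof.
elim: s => [|a s IH] h /=; first by rewrite mulmx1 mul1mx.
rewrite mulmxA h ?mem_head // -!mulmxA IH //.
by move=> k ks; apply: h; rewrite inE ks orbT.
Qed.

Lemma hi_move (j : 'I_N) :
  prodl (R0' j) (rev (hiN N j.+1)) *m P0 r xi Rm j = P0 r xi Rm j *m Lop (r j) (A_ j).
Proof.
rewrite /A_ Lop_prodl; apply: move_prodl => k; rewrite mem_rev mem_hiN => jk.
apply: R0k_P0 => //; by rewrite neq_ltn jk orbT.
Qed.

Lemma lo_move (j : 'I_N) :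
  P0 r xi Rm j *m prodl (R0' j) (rev (lo N j)) = Lop (r j) (B_ j) *m P0 r xi Rm j.
Proof.
rewrite /B_ Lop_prodl; apply: move_prodl' => k; rewrite mem_rev mem_lo => kj.
have kj' : k != j by rewrite neq_ltn kj.
have e := R0k_P0 r xi hinit kj'.
rewrite -[LHS]mulmx1 -(P0_invol r xi hinit j) !mulmxA -[P0 _ _ _ _ *m _ *m _]mulmxA /R0' e.
by rewrite !mulmxA P0_invol // mul1mx.
Qed.


Lemma tr0_mono (j : 'I_N) (Z : 'M[C]_#|Aidx r (r j)|) (W : 'M[C]_#|H|) :
  local [set j] W -> Z *m P0 r xi Rm j = P0 r xi Rm j *m Lop (r j) W ->
  tr0 (Z *m monodromy r xi Rm (r j) (xi j)) = B_ j *m W *m A_ j.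
Proof.
move=> hW hZ.
set P := P0 r xi Rm j.
set Rlo := prodl (R0' j) (rev (lo N j)).
have comm : Lop (r j) (W *m A_ j) *m Rlo = Rlo *m Lop (r j) (W *m A_ j).
  apply: comm_prodl => k; rewrite mem_rev mem_lo => kj.
  have kS : k \notin [set j] by rewrite inE neq_ltn kj.
  rewrite Lop_mul -mulmxA.
  have -> : Lop (r j) (A_ j) *m R0' j k = R0' j k *m Lop (r j) (A_ j).
    rewrite /A_ Lop_prodl; symmetry; apply: comm_prodl => k'.
    rewrite mem_rev mem_hiN => jk'.
    symmetry; apply: (Lop_R0k Rm _ _ (Rs_local r xi Rm j k')).
    rewrite !inE negb_or neq_ltn kj /= neq_ltn.
    by rewrite (ltn_trans kj jk').
  by rewrite !mulmxA; congr (_ *m _); apply: (Lop_R0k Rm _ _ hW kS).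
have E1 : Z *m monodromy r xi Rm (r j) (xi j) = Lop (r j) (B_ j) *m P *m Lop (r j) (W *m A_ j).
  rewrite mono_split -/P -/Rlo hi_move !mulmxA hZ.
  rewrite -[P0 _ _ _ _ *m _ *m _]mulmxA -Lop_mul -mulmxA comm mulmxA -/P.
  by rewrite lo_move.
by rewrite E1 -mulmxA tr0_Lmul tr0_mulL tr0_P0 // mul1mx mulmxA.
Qed.


Lemma local1 (j : 'I_N) : local [set j] (1%:M : 'M[C]_#|H|).
Proof.
exists (fun x y : H => b2C (x j == y j)); split.
  by move=> x x' y y' hx hy; rewrite hx ?hy // inE.
rewrite -mkop1; apply: mkopP => x y.
by rewrite -b2C_and (eq_off1 j).
Qed.

Lemma tsite_eq (j : 'I_N) : tsite r xi Rm j = B_ j *m A_ j.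
Proof.
rewrite /tsite /transfer -[monodromy _ _ _ _ _]mul1mx (tr0_mono (W := 1%:M)).
- by rewrite mulmx1.
- exact: local1.
- by rewrite mul1mx Lop1 mulmx1.
Qed.

Lemma tr0E_eq (n : 'I_N) (E : 'M[C]_((r n).+1)) :
  tr0 (E_aux E *m monodromy r xi Rm (r n) (xi n)) = B_ n *m E_site E *m A_ n.
Proof.
apply: tr0_mono; [exact: Esite_local | exact: (Eaux_P0 xi hinit)].
Qed.

End Main.

Section Alg.
Variables (N : nat) (r : 'I_N -> nat) (xi : 'I_N -> C) (Rm : Rfamily).
Hypothesis hinit : initial_condition Rm.
Hypothesis hY : YBE Rm.
Local Notation H := (Hidx r).
Local Notation Rs := (Rs r xi Rm).

Definition Aco (i : 'I_N) (c : nat) := prodl (Rs i) (rev (hiN N c)).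
Definition Sp (c p : nat) := prodl (fun i => Aco i c) (lo N p).

Lemma disj2 (i j k l : 'I_N) : i != k -> i != l -> j != k -> j != l ->
  [disjoint [set i; j] & [set k; l]].
Proof.
move=> h1 h2 h3 h4; rewrite -setI_eq0; apply/eqP/setP => x; rewrite !inE.
apply/negbTE; apply/negP => /andP [/orP [] /eqP -> /orP [] /eqP e]; subst.
- by rewrite eqxx in h1.
- by rewrite eqxx in h2.
- by rewrite eqxx in h3.
- by rewrite eqxx in h4.
Qed.

Lemma Rcomm (i j k l : 'I_N) : i != k -> i != l -> j != k -> j != l ->
  Rs i j *m Rs k l = Rs k l *m Rs i j.
Proof.
move=> h1 h2 h3 h4; apply: local_comm (disj2 h1 h2 h3 h4) _ _; exact: Rs_local.
Qed.

Lemma Runit (j k : 'I_N) : j != k ->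
  Rs j k *m Rs k j = @Xk Rm (r j) (r k) (xi j - xi k) (ord0, ord0) (ord0, ord0) *: 1%:M.
Proof.
move=> jk; apply: Rs_unit => // p q; exact: (Xk_scalar hinit).
Qed.

Lemma lo0 : lo N 0 = [::].
Proof. by rewrite /lo (@eq_filter _ _ pred0) ?filter_pred0. Qed.

Lemma step2 (m : 'I_N) (p : nat) : (p <= m)%N ->
  exists d : C, Sp m p *m prodl (Rs m) (rev (lo N p)) = d *: Sp m.+1 p.
Proof.
elim: p => [|p IH] hp.
  by exists 1; rewrite /Sp lo0 /= mulmx1 scale1r.
have hpm : (p < m)%N := hp.
have hpN : (p < N)%N := ltn_trans hpm (ltn_ord m).
set p' := Ordinal hpN.
have hl : lo N p.+1 = lo N p ++ [:: p'] := lo_S p'.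
have [d Hd] := IH (ltnW hp).
have hA : Aco p' m = Aco p' m.+1 *m Rs p' m.
  by rewrite /Aco (hiN_S m) rev_cons -cats1 prodl_cat prodl1.
have hc : Aco p' m.+1 *m prodl (Rs m) (rev (lo N p)) = prodl (Rs m) (rev (lo N p)) *m Aco p' m.+1.
  symmetry; apply: comm_prodl => k; rewrite mem_rev mem_hiN => mk.
  symmetry; apply: comm_prodl => i; rewrite mem_rev mem_lo => ip.
  apply: Rcomm.
  - by rewrite neq_ltn hpm.
  - by rewrite neq_ltn ip orbT.
  - by rewrite neq_ltn mk orbT.
  - by rewrite neq_ltn (ltn_trans ip (ltn_trans hpm mk)) orbT.
have pm : p' != m by rewrite neq_ltn hpm.
exists (@Xk Rm (r p') (r m) (xi p' - xi m) (ord0, ord0) (ord0, ord0) * d).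
rewrite /Sp hl !prodl_cat !prodl1 rev_cat /= -/(Sp m p) -/(Sp m.+1 p) hA.
rewrite !mulmxA -[_ *m Rs p' m *m Rs m p']mulmxA Runit //.
rewrite -scalemxAr mulmx1 -scalemxAl -mulmxA hc mulmxA Hd -scalemxAl scalerA.
by [].
Qed.


Lemma step1 (p : nat) : (p <= N)%N -> exists g : C, tprod r xi Rm p = g *: Sp p p.
Proof.
elim: p => [|p IH] hp.
  by exists 1; rewrite scale1r /Sp /tprod -/(lo N 0) lo0.
have hpN : (p < N)%N := hp.
set p' := Ordinal hpN.
have hl : lo N p.+1 = lo N p ++ [:: p'] := lo_S p'.
have [g Hg] := IH (ltnW hp).
have [d Hd] := @step2 p' p (leqnn p).
exists (g * d).
have -> : tprod r xi Rm p.+1 = prodl (tsite r xi Rm) (lo N p.+1) by [].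
rewrite hl prodl_cat prodl1.
have -> : prodl (tsite r xi Rm) (lo N p) = tprod r xi Rm p by [].
rewrite Hg (tsite_eq r xi hinit p') mulmxA -scalemxAl.
have -> : Sp p p *m B_ r xi Rm p' = d *: Sp p.+1 p by exact: Hd.
rewrite -!scalemxAl scalerA; congr (_ *: _).
by rewrite /Sp hl prodl_cat prodl1.
Qed.

Lemma step3 (n : 'I_N) (E : 'M[C]_((r n).+1)) :
  E_site E *m Sp n.+1 n = Sp n.+1 n *m E_site E.
Proof.
apply: comm_prodl => i; rewrite mem_lo => ilt.
apply: comm_prodl => k; rewrite mem_rev mem_hiN => nk.
apply: (local_comm _ (Esite_local E) (Rs_local r xi Rm i k)).
rewrite disjoints1 !inE negb_or.
by rewrite !neq_ltn ilt nk orbT.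
Qed.

Lemma key (n : 'I_N) (E : 'M[C]_((r n).+1)) :
  E_site E *m tprod r xi Rm n.+1 =
  tprod r xi Rm n *m tr0 (E_aux E *m monodromy r xi Rm (r n) (xi n)).
Proof.
have hl : lo N n.+1 = lo N n ++ [:: n] := lo_S n.
have -> : tprod r xi Rm n.+1 = prodl (tsite r xi Rm) (lo N n.+1) by [].
rewrite hl prodl_cat prodl1.
have -> : prodl (tsite r xi Rm) (lo N n) = tprod r xi Rm n by [].
have [g Hg] := @step1 n (ltnW (ltn_ord n)).
have [d Hd] := @step2 n n (leqnn n).
rewrite (tr0E_eq xi hinit) (tsite_eq r xi hinit) Hg.
rewrite !mulmxA -!scalemxAl -!scalemxAr -!scalemxAl.
have e1 : Sp n n *m B_ r xi Rm n = d *: Sp n.+1 n by exact: Hd.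
rewrite -[_ *m Sp n n *m B_ r xi Rm n]mulmxA e1.
congr (_ *: _); by rewrite -scalemxAr step3 -scalemxAl.
Qed.

End Alg.

Unset Implicit Arguments.

(* Sites are 0-based: site n here is site n+1 of the paper. *)
Theorem proposition3p1 (N : nat) (r : 'I_N -> nat) (xi : 'I_N -> C)
    (Rm : Rfamily) (hYBE : YBE Rm) (hinit : initial_condition Rm)
    (n : 'I_N)
    (hinv : forall i : 'I_N, (i <= n)%N -> tsite r xi Rm i \in unitmx)
    (E : 'M[C]_((r n).+1)) :
  E_site E =
    tprod r xi Rm n *m tr0 (E_aux E *m monodromy r xi Rm (r n) (xi n))
    *m invmx (tprod r xi Rm n.+1).
Proof.
have hk := key xi hinit hYBE E.
have hu : tprod r xi Rm n.+1 \in unitmx.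
  have -> : tprod r xi Rm n.+1 = prodl (tsite r xi Rm) (lo N n.+1) by [].
  by apply: unit_prodl => i; rewrite mem_lo ltnS => hi; apply: hinv.
by rewrite -hk mulmxK.
Qed.
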